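(* Let $T$ be a string of length $n$, let $1 \le i \le j \le n$, let $T[i..t]$ be the longest palindromic prefix and $T[s..j]$ the longest palindromic suffix of $T[i..j]$. Let $L$ be the maximum length of a maximal palindrome $T[p..q]$ of $T$ whose center $c = \frac{p+q}{2}$ satisfies $\frac{i+t}{2} < c < \frac{s+j}{2}$ (with $L = 0$ if no such center exists). Then the length of a longest palindromic substring of $T[i..j]$ equals $\max\{\,t-i+1,\; j-s+1,\; L\,\}$. Equivalently, defining the array $\mathsf{MP}[1..2n-1]$ by letting $\mathsf{MP}[2c-1]$ be the length of the maximal palindrome of $T$ with center $c$ for each $c \in \{1, 1.5, 2, \ldots, n-0.5, n\}$, we have $L = \max\{\mathsf{MP}[k] : i+t \le k \le s+j-2\}$ when $i+t \le s+j-2$.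
   Context: Strings are 1-indexed: $T[k]$ is the $k$-th character and $T[i..j] = T[i]\cdots T[j]$. A palindrome is a string equal to its reversal. The center of $T[p..q]$ is $\frac{p+q}{2}$. A palindromic substring $T[p..q]$ is a maximal palindrome in $T$ if $p = 1$, $q = n$, or $T[p-1] \ne T[q+1]$; for each integer or half-integer $c$ with $1 \le c \le n$ there is exactly one maximal palindrome with center $c$ (for half-integer $c$ it may be empty). The longest palindromic prefix (suffix) of $T[i..j]$ is the longest prefix (suffix) of $T[i..j]$ that is a palindrome. *)

(* Defs.v *)
(* Strings are sequences over an alphabet A : eqType.
   Positions are 1-indexed as in the paper. *)
From mathcomp Require Import all_boot.
Set Implicit Arguments. Unset Strict Implicit. Unset Printing Implicit Defensive.

Section Strings.
Variable A : eqType.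

Definition is_pal (u : seq A) : bool := u == rev u.

(* T[i..j] (1-indexed, inclusive); length (j+1) - i, so T[i..i-1] is empty *)
Definition sub (T : seq A) (i j : nat) : seq A :=
  take (j.+1 - i) (drop i.-1 T).

(* T[p..q] is a maximal palindrome of T (possibly empty when q = p - 1):
   1 <= p, q <= n, p <= q + 1, palindromic, and p = 1, q = n or T[p-1] <> T[q+1]. *)
Definition maxpal (T : seq A) (p q : nat) : bool :=
  [&& 1 <= p, q <= size T, p <= q.+1, is_pal (sub T p q) &
      [|| p == 1, q == size T | sub T p.-1 p.-1 != sub T q.+1 q.+1]].

Definition lps (u : seq A) : nat :=
  \max_(a < (size u).+1) \max_(b < (size u).+1 | (a <= b) && is_pal (drop a (take b u)))
     (b - a).

(* L: maximum length of a maximal palindrome T[p..q] whose center (p+q)/2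
   lies strictly between cl/2 and cr/2 (0 if none). *)
Definition Lmax (T : seq A) (cl cr : nat) : nat :=
  \max_(p < (size T).+2) \max_(q < (size T).+1 | maxpal T p q && (cl < p + q < cr))
     (q.+1 - p).

(* MP[k] (1 <= k <= 2n-1): length of the maximal palindrome of T with center
   c = (k+1)/2, i.e. with p + q = k + 1. *)
Definition MP (T : seq A) (k : nat) : nat :=
  \max_(p < (size T).+2) \max_(q < (size T).+1 | maxpal T p q && (p + q == k.+1))
     (q.+1 - p).

End Strings.

(* Main.v *)
Require Import Defs.
From mathcomp Require Import all_boot zify.
Set Implicit Arguments. Unset Strict Implicit. Unset Printing Implicit Defensive.

Lemma max2_ge N M (C : nat -> nat -> bool) (F : nat -> nat -> nat) a b :
  a < N -> b < M -> C a b -> F a b <= \max_(x < N) \max_(y < M | C x y) F x y.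
Proof.
move=> Ha Hb HC; apply: leq_trans (leq_bigmax (Ordinal Ha)).
exact: (leq_bigmax_cond (Ordinal Hb)).
Qed.

Lemma max2_le N M (C : nat -> nat -> bool) (F : nat -> nat -> nat) m :
  (forall a b, a < N -> b < M -> C a b -> F a b <= m) ->
  \max_(x < N) \max_(y < M | C x y) F x y <= m.
Proof.
move=> H; apply/bigmax_leqP => x _; apply/bigmax_leqP => y Hy; exact: H.
Qed.

Section Aux.
Variables (A : eqType) (x0 : A) (T : seq A).
Local Notation n := (size T).
Local Notation c k := (nth x0 T k.-1).
Definition P a b := forall k, a <= k <= b -> c k = c (a + b - k).

Lemma is_palP (u : seq A) : is_pal u <->
  forall k, k < size u -> nth x0 u k = nth x0 u (size u - k.+1).
Proof.
rewrite /is_pal; split.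
- by move/eqP=> E k Hk; rewrite {1}E nth_rev.
- move=> H; apply/eqP; apply: (eq_from_nth (x0:=x0)); first by rewrite size_rev.
  by move=> k Hk; rewrite nth_rev // H.
Qed.

Lemma size_sub a b : 1 <= a -> b <= n -> size (sub T a b) = b.+1 - a.
Proof. move=> Ha Hb; rewrite /sub size_takel // size_drop; lia. Qed.

Lemma nth_sub a b k : k < b.+1 - a -> nth x0 (sub T a b) k = nth x0 T (a.-1 + k).
Proof. by move=> Hk; rewrite /sub nth_take // nth_drop. Qed.

Lemma palP a b : 1 <= a -> b <= n -> is_pal (sub T a b) <-> P a b.
Proof.
move=> Ha Hb; rewrite is_palP size_sub //; split.
- move=> H k /andP[H1 H2]; have := H (k - a) ltac:(lia).
  rewrite !nth_sub; [|lia|lia].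
  have -> : a.-1 + (k - a) = k.-1 by lia.
  by have -> : a.-1 + (b.+1 - a - (k - a).+1) = (a + b - k).-1 by lia.
- move=> H k Hk; rewrite !nth_sub; [|lia|lia].
  have := H (a + k) ltac:(lia).
  have -> : (a + k).-1 = a.-1 + k by lia.
  by have -> : (a + b - (a + k)).-1 = a.-1 + (b.+1 - a - k.+1) by lia.
Qed.

Lemma sub_single k : 1 <= k <= n -> sub T k k = [:: c k].
Proof.
move=> /andP[H1 H2]; apply: (eq_from_nth (x0:=x0)); first by rewrite size_sub //=; lia.
rewrite size_sub // => m Hm; have -> : m = 0 by lia.
rewrite nth_sub /=; [by have -> : k.-1 + 0 = k.-1 by lia | lia].
Qed.

Lemma P_in p q a b : P p q -> p <= a -> a + b = p + q -> P a b.
Proof.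
move=> H Hpa Hs k Hk; rewrite Hs; apply: H; lia.
Qed.

Lemma P_ext a b : 1 <= a -> P a b -> c a.-1 = c b.+1 -> P a.-1 b.+1.
Proof.
move=> Ha H E k Hk.
have -> : a.-1 + b.+1 - k = a + b - k by lia.
case: (ltngtP k a.-1) => [?|Hk2|->]; first lia.
- case: (ltngtP k b.+1) => [Hk3|?|->]; last 1 first.
  + by have -> : a + b - b.+1 = a.-1 by lia.
  + apply: H; lia.
  + lia.
- by have -> : a + b - a.-1 = b.+1 by lia.
Qed.

Lemma extend a b : 1 <= a -> a <= b.+1 -> b <= n -> P a b ->
  exists p q, [/\ maxpal T p q, p + q = a + b, p <= a & b <= q].
Proof.
elim: a b => [|a IH] b Ha Hab Hb H; first lia.
have Hpal : is_pal (sub T a.+1 b) by apply/palP.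
case: (eqVneq a 0) => [a0|an0].
  exists a.+1, b; split => //; rewrite /maxpal Hpal; apply/and5P; split => //; try lia.
case: (eqVneq b n) => [bn|bnn].
  exists a.+1, b; split => //; rewrite /maxpal Hpal; apply/and5P; split => //; try lia.
case: (eqVneq (c a) (c b.+1)) => [E|NE].
- have H' : P a b.+1 by exact: (P_ext (a:=a.+1)).
  have [p [q [M S Hp Hq]]] := IH b.+1 ltac:(lia) ltac:(lia) ltac:(lia) H'.
  exists p, q; split => //; lia.
- exists a.+1, b; split => //; rewrite /maxpal Hpal; apply/and5P; split => //; try lia.
  rewrite !sub_single; [|lia|lia].
  apply/orP; right; apply/orP; right.
  by apply: contra NE => /eqP [->].
Qed.

Lemma dt i j a b : 1 <= i -> a <= b -> b <= j.+1 - i ->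
  drop a (take b (sub T i j)) = sub T (i + a) (i + b - 1).
Proof.
move=> Hi Hab Hb; rewrite /sub take_takel //.
have -> : (i + a).-1 = a + i.-1 by lia.
rewrite -drop_drop; set X := drop i.-1 T; rewrite take_drop.
by have -> : (i + b - 1).+1 - (i + a) + a = b by lia.
Qed.

Lemma contain i j t s p q : 1 <= i -> i <= j -> j <= n -> i <= t <= j ->
  (forall t', i <= t' <= j -> is_pal (sub T i t') -> t' <= t) ->
  i <= s <= j -> (forall s', i <= s' <= j -> is_pal (sub T s' j) -> s <= s') ->
  P p q -> 1 <= p -> q <= n -> p <= q.+1 -> i + t < p + q < s + j ->
  i <= p /\ q <= j.
Proof.
move=> Hi Hij Hjn /andP[Hit Htj] Tmax /andP[His Hsj] Smax Hpq Hp Hq Hpq1 /andP[C1 C2].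
case: (leqP i p) => Hip; case: (leqP q j) => Hqj; first by split.
all: exfalso; case: (leqP (p + q) (i + j)) => Hc.
all: try lia.
all: first [
  (have Pi : P i (p + q - i) by apply: (P_in Hpq); lia);
  (have H1 : i <= p + q - i <= j by lia);
  have H2 := proj2 (palP (a:=i) (b:=p+q-i) ltac:(lia) ltac:(lia)) Pi;
  have := Tmax _ H1 H2; lia
| (have Ps : P (p + q - j) j by apply: (P_in Hpq); lia);
  (have H1 : i <= p + q - j <= j by lia);
  have H2 := proj2 (palP (a:=p+q-j) (b:=j) ltac:(lia) ltac:(lia)) Ps;
  have := Smax _ H1 H2; lia ].
Qed.
End Aux.

Lemma part2 (A : eqType) (T : seq A) cl cr :
  Lmax T cl cr = \max_(cl <= k < cr.-1) MP T k.
Proof.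
apply/eqP; rewrite eqn_leq; apply/andP; split.
- rewrite /Lmax; apply: (max2_le (C := fun x y => maxpal T x y && (cl < x + y < cr))
       (F := fun x y => y.+1 - x)) => p q Hp Hq /andP[M /andP[H1 H2]].
  have HM : q.+1 - p <= MP T (p + q).-1.
    rewrite /MP; apply: (@max2_ge _ _ (fun x y => maxpal T x y && (x + y == (p + q).-1.+1))
       (fun x y => y.+1 - x)) => //.
    rewrite M /=; apply/eqP; move: M => /and5P[]; lia.
  apply: leq_trans HM _.
  apply: (leq_bigmax_seq (F := MP T)) => //; rewrite mem_index_iota; lia.
- apply/bigmax_leqP_seq => k; rewrite mem_index_iota => Hk _.
  rewrite /MP; apply: (max2_le (C := fun x y => maxpal T x y && (x + y == k.+1))
       (F := fun x y => y.+1 - x)) => p q Hp Hq /andP[M /eqP E].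
  rewrite /Lmax; apply: (@max2_ge _ _ (fun x y => maxpal T x y && (cl < x + y < cr))
       (fun x y => y.+1 - x)) => //.
  rewrite M /=; apply/andP; split; lia.
Qed.


Theorem mainTheorem5 (A : eqType) (T : seq A) (i j t s : nat) :
  1 <= i -> i <= j -> j <= size T ->
  (* T[i..t] is the longest palindromic prefix of T[i..j] *)
  i <= t <= j -> is_pal (sub T i t) ->
  (forall t', i <= t' <= j -> is_pal (sub T i t') -> t' <= t) ->
  (* T[s..j] is the longest palindromic suffix of T[i..j] *)
  i <= s <= j -> is_pal (sub T s j) ->
  (forall s', i <= s' <= j -> is_pal (sub T s' j) -> s <= s') ->
  lps (sub T i j) = maxn (t.+1 - i) (maxn (j.+1 - s) (Lmax T (i + t) (s + j)))
  /\ (i + t <= s + j - 2 ->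
      Lmax T (i + t) (s + j) = \max_(i + t <= k < (s + j).-1) MP T k).
Proof.
move=> Hi Hij Hjn Hit Pt Tmax Hs Ps Smax.
split; last by move=> _; exact: part2.
have x0 : A by destruct T as [|x ?]; [simpl in Hjn; exfalso; lia | exact x].
move: (Hit) (Hs) => /andP[Hit1 Hit2] /andP[Hs1 Hs2].
apply/eqP; rewrite eqn_leq; apply/andP; split.
- rewrite /lps size_sub //.
  apply: (max2_le (C := fun x y => (x <= y) && is_pal (drop x (take y (sub T i j))))
       (F := fun x y => y - x)) => a b Ha Hb /andP[Hab Hpal].
  rewrite (dt _ Hi Hab) in Hpal; last lia.
  case: (eqVneq a b) => [->|Hne]; first by rewrite subnn.
  have Q1 : 1 <= i + a by lia.
  have Q2 : i + b - 1 <= size T by lia.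
  have HP := proj1 (palP x0 Q1 Q2) Hpal.
  case: (leqP (i + a + (i + b - 1)) (i + t)) => C1; first lia.
  case: (leqP (s + j) (i + a + (i + b - 1))) => C2; first lia.
  have Q3 : i + a <= (i + b - 1).+1 by lia.
  have [p [q [M S Hp Hq]]] := extend Q1 Q3 Q2 HP.
  have HL : q.+1 - p <= Lmax T (i + t) (s + j).
    move: (M) => /and5P[M1 M2 M3 M4 M5].
    rewrite /Lmax; apply: (@max2_ge _ _ (fun x y => maxpal T x y && (i + t < x + y < s + j))
       (fun x y => y.+1 - x)); [lia|lia|].
    rewrite M /=; apply/andP; split; lia.
  lia.
- rewrite !geq_max; apply/and3P; split.
  + have := @max2_ge (size (sub T i j)).+1 (size (sub T i j)).+1
       (fun x y => (x <= y) && is_pal (drop x (take y (sub T i j))))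
       (fun x y => y - x) 0 (t.+1 - i).
    rewrite /lps; move=> H; apply: leq_trans (H _ _ _); rewrite ?size_sub //; try lia.
    rewrite /= (dt _ Hi); try lia.
    have -> : i + (t.+1 - i) - 1 = t by lia.
    by rewrite addn0.
  + have := @max2_ge (size (sub T i j)).+1 (size (sub T i j)).+1
       (fun x y => (x <= y) && is_pal (drop x (take y (sub T i j))))
       (fun x y => y - x) (s - i) (j.+1 - i).
    rewrite /lps; move=> H; apply: leq_trans (H _ _ _); rewrite ?size_sub //; try lia.
    rewrite /= (dt _ Hi); try lia.
    have -> : i + (s - i) = s by lia.
    have -> : i + (j.+1 - i) - 1 = j by lia.
    rewrite Ps andbT; lia.
  + rewrite /Lmax; apply: (max2_le (C := fun x y => maxpal T x y && (i + t < x + y < s + j))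
       (F := fun x y => y.+1 - x)) => p q Hp Hq /andP[M Cr].
    move: (M) => /and5P[M1 M2 M3 M4 M5].
    have HP := proj1 (palP x0 (a := p) (b := q) M1 M2) M4.
    have [Hip Hqj] := contain Hi Hij Hjn Hit Tmax Hs Smax HP M1 M2 M3 Cr.
    have := @max2_ge (size (sub T i j)).+1 (size (sub T i j)).+1
       (fun x y => (x <= y) && is_pal (drop x (take y (sub T i j))))
       (fun x y => y - x) (p - i) (q.+1 - i).
    rewrite /lps; move=> H; apply: leq_trans (H _ _ _); rewrite ?size_sub //; try lia.
    rewrite /= (dt _ Hi); try lia.
    have -> : i + (p - i) = p by lia.
    have -> : i + (q.+1 - i) - 1 = q by lia.
    rewrite M4 andbT; lia.
Qed.
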